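(* Let $X_1,\dots,X_n\in\mathbb{R}^d$, and let $f^*=\nabla\psi_{f^*}$ for a differentiable $\psi_{f^*}:\mathbb{R}^d\to\mathbb{R}$ satisfying: (A1) $\psi_{f^*}(z)\ge\psi_{f^*}(x)+\langle\nabla\psi_{f^*}(x),z-x\rangle+\frac{\lambda}{2}\|x-z\|_2^2$ for all $x,z$ (some $\lambda>0$); (A2) $\psi_{f^*}(z)\le\psi_{f^*}(x)+\langle\nabla\psi_{f^*}(x),z-x\rangle+\frac{L}{2}\|x-z\|_2^2$ for all $x,z$ (some $L>0$); (A3) $\max_i\|f^*(X_i)\|_2\le B$ for some $B<\infty$. Let $\theta_i^*=f^*(X_i)$, $\nu_n^*=\frac1n\sum_{i=1}^n\delta_{\theta_i^*}$, $\mu_n=\frac1n\sum_{i=1}^n\delta_{X_i}$, and let $\widehat\nu=\sum_{j=1}^p\widehat\alpha_j\delta_{\widehat\theta_j}$ be any atomic probability measure on $\mathbb{R}^d$ ($\widehat\alpha_j>0$, $\sum_j\widehat\alpha_j=1$). Let $\widehat\Gamma\in\mathbb{R}_+^{n\times p}$ be an optimal coupling, i.e. a minimizer of $\sum_{i,j}\Gamma_{ij}\frac12\|X_i-\widehat\theta_j\|_2^2$ subject to $\sum_i\Gamma_{ij}=\widehat\alpha_j$ for all $j$ and $\sum_j\Gamma_{ij}=1/n$ for all $i$, and define $\widehat f(X_i)=n\sum_{j=1}^p\widehat\Gamma_{ij}\widehat\theta_j$. Then $$\frac1n\sum_{i=1}^n\|\widehat f(X_i)-f^*(X_i)\|_2^2\le\frac{L}{\lambda}\,\mathsf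 W_2^2(\nu_n^*,\widehat\nu).$$
   Context: For probability measures $\mu,\nu$ on $\mathbb{R}^d$ with finite second moments, $\mathsf W_2^2(\mu,\nu)=\inf_{\gamma}\int\int\|x-y\|_2^2\,d\gamma(x,y)$, the infimum over all couplings $\gamma$ of $\mu$ and $\nu$ (probability measures on $\mathbb{R}^d\times\mathbb{R}^d$ with marginals $\mu$ and $\nu$). *)

(* Defs.v *)
From HB Require Import structures.
From mathcomp Require Import all_boot all_order all_algebra.
From mathcomp Require Import all_classical all_reals all_analysis.
Set Implicit Arguments. Unset Strict Implicit. Unset Printing Implicit Defensive.
Import Order.TTheory GRing.Theory Num.Theory.
Import numFieldNormedType.Exports.
Local Open Scope ring_scope.
Local Open Scope classical_set_scope.

Section Defs.
Variable R : realType.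

Definition dotv (d : nat) (u v : 'rV[R]_d) : R := \sum_(k < d) u 0 k * v 0 k.
Definition sqnorm2 (d : nat) (u : 'rV[R]_d) : R := dotv u u.
Definition norm2 (d : nat) (u : 'rV[R]_d) : R := Num.sqrt (sqnorm2 u).

Definition is_gradient (d : nat) (psi : 'rV[R]_d -> R) (f : 'rV[R]_d -> 'rV[R]_d) :=
  forall x, differentiable psi x /\ forall h, ('d psi x : 'rV[R]_d -> R) h = dotv (f x) h.

(* Gamma (n x p, entries >= 0) couples the discrete measures
   (1/n) sum_i delta_{a_i}  and  sum_j alpha_j delta_{b_j}  (row/column marginals). *)
Definition is_coupling (n p : nat) (alpha : 'rV[R]_p) (G : 'M[R]_(n, p)) :=
  (forall i j, 0 <= G i j) /\
  (forall j, \sum_(i < n) G i j = alpha 0 j) /\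
  (forall i, \sum_(j < p) G i j = n%:R^-1).

Definition coupling_cost (n p d : nat) (a : 'I_n -> 'rV[R]_d) (b : 'I_p -> 'rV[R]_d)
  (G : 'M[R]_(n, p)) : R :=
  \sum_(i < n) \sum_(j < p) G i j * sqnorm2 (a i - b j).

Definition W2sq_discrete (n p d : nat) (a : 'I_n -> 'rV[R]_d) (alpha : 'rV[R]_p)
  (b : 'I_p -> 'rV[R]_d) : R :=
  inf [set c | exists G : 'M[R]_(n, p), is_coupling alpha G /\ c = coupling_cost a b G].

End Defs.

(* Main.v *)
Require Import Defs.
From HB Require Import structures.
From mathcomp Require Import all_boot all_order all_algebra.
From mathcomp Require Import all_classical all_reals all_analysis.
From mathcomp Require Import ring lra.
Import Order.TTheory GRing.Theory Num.Theory.
Local Open Scope ring_scope.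

Section Helpers.
Set Implicit Arguments.
Context {R : realType}.
Context {d : nat}.
Implicit Types u v w : 'rV[R]_d.

Lemma dotvC u v : dotv u v = dotv v u.
Proof. by apply: eq_bigr => k _; rewrite mulrC. Qed.

Lemma dotvDl u v w : dotv (u + v) w = dotv u w + dotv v w.
Proof. rewrite /dotv -big_split; by apply: eq_bigr => k _; rewrite !mxE /= mulrDl. Qed.

Lemma dotvNl u w : dotv (- u) w = - dotv u w.
Proof. rewrite /dotv -sumrN; by apply: eq_bigr => k _; rewrite !mxE mulNr. Qed.

Lemma dotvZl (a : R) u w : dotv (a *: u) w = a * dotv u w.
Proof. rewrite /dotv mulr_sumr; by apply: eq_bigr => k _; rewrite !mxE mulrA. Qed.

Lemma dotvBl u v w : dotv (u - v) w = dotv u w - dotv v w.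
Proof. by rewrite dotvDl dotvNl. Qed.

Lemma dotvDr u v w : dotv w (u + v) = dotv w u + dotv w v.
Proof. by rewrite dotvC dotvDl !(dotvC w). Qed.
Lemma dotvBr u v w : dotv w (u - v) = dotv w u - dotv w v.
Proof. by rewrite dotvC dotvBl !(dotvC w). Qed.
Lemma dotvZr (a : R) u w : dotv w (a *: u) = a * dotv w u.
Proof. by rewrite dotvC dotvZl dotvC. Qed.

Lemma sqnorm2B u v : sqnorm2 (u - v) = sqnorm2 u - 2 * dotv u v + sqnorm2 v.
Proof. rewrite /sqnorm2 dotvBl !dotvBr (dotvC v u); ring. Qed.

Lemma sqnorm2Z (a : R) u : sqnorm2 (a *: u) = a ^+ 2 * sqnorm2 u.
Proof. rewrite /sqnorm2 dotvZl dotvZr; ring. Qed.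

Lemma sqnorm2N u : sqnorm2 (- u) = sqnorm2 u.
Proof. rewrite /sqnorm2 dotvNl dotvC dotvNl; ring. Qed.

Lemma sqnorm2_ge0 u : 0 <= sqnorm2 u.
Proof. by apply: sumr_ge0 => k _; rewrite -expr2 sqr_ge0. Qed.

End Helpers.

Section Conj.
Set Implicit Arguments.
Context {R : realType}.
Context {d : nat}.
Variables (psi : 'rV[R]_d -> R) (f : 'rV[R]_d -> 'rV[R]_d) (lam L : R).
Hypothesis lam_gt0 : 0 < lam.
Hypothesis L_gt0 : 0 < L.
Hypothesis A1 : forall x z, psi z >= psi x + dotv (f x) (z - x) + lam / 2 * sqnorm2 (x - z).
Hypothesis A2 : forall x z, psi z <= psi x + dotv (f x) (z - x) + L / 2 * sqnorm2 (x - z).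

Lemma pt_upper x y z :
  dotv z y - psi z <= dotv x y - psi x + (2 * lam)^-1 * sqnorm2 (f x - y).
Proof.
have H := A1 x z.
have Hz : dotv z y = dotv x y + dotv (z - x) y by rewrite dotvBl; ring.
have Hxz : sqnorm2 (x - z) = sqnorm2 (z - x) by rewrite -sqnorm2N opprB.
have Hv : sqnorm2 (f x - y) = sqnorm2 (y - f x) by rewrite -sqnorm2N opprB.
have P := sqnorm2_ge0 (lam *: (z - x) - (y - f x)).
rewrite sqnorm2B sqnorm2Z dotvZl dotvBr (dotvC (z - x) (f x)) in P.
rewrite Hz Hv; rewrite Hxz in H.
move: H P; set W := sqnorm2 (z - x); set V := sqnorm2 (y - f x);
  set b := dotv (z - x) y; set c := dotv (f x) (z - x); set a := dotv x y.
move=> H P.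
have E : V / (2 * lam) - (b - c - lam / 2 * W) =
   (lam ^+ 2 * W - 2 * (lam * (b - c)) + V) / (2 * lam).
  by field; rewrite gt_eqF.
have : 0 <= (lam ^+ 2 * W - 2 * (lam * (b - c)) + V) / (2 * lam).
    by apply: divr_ge0 => //; rewrite mulr_ge0 // ltW.
move=> G; have G2 : (2 * lam)^-1 * V = V / (2 * lam) by rewrite mulrC.
lra.
Qed.

Lemma pt_lower x y :
  dotv x y - psi x + (2 * L)^-1 * sqnorm2 (f x - y) <=
  dotv (x + L^-1 *: (y - f x)) y - psi (x + L^-1 *: (y - f x)).
Proof.
set v := y - f x; set z := x + L^-1 *: v.
have zx : z - x = L^-1 *: v by rewrite /z addrAC subrr add0r.
have H := A2 x z.
have Hz : dotv z y = dotv x y + dotv (z - x) y by rewrite dotvBl; ring.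
have Hxz : sqnorm2 (x - z) = sqnorm2 (z - x) by rewrite -sqnorm2N opprB.
have Hv : sqnorm2 (f x - y) = sqnorm2 v by rewrite -sqnorm2N opprB.
rewrite Hxz zx sqnorm2Z dotvZr in H.
rewrite Hz zx dotvZl Hv.
have VV : sqnorm2 v = dotv v y - dotv (f x) v by rewrite /sqnorm2 {2}/v dotvBr (dotvC v (f x)).
move: H; rewrite VV; set b := dotv v y; set c := dotv (f x) v; move=> H.
have E : L^-1 * (b - c) - L / 2 * (L^-1 ^+ 2 * (b - c)) = (2 * L)^-1 * (b - c).
  by field; rewrite gt_eqF.
lra.
Qed.

Definition hconj (y : 'rV[R]_d) : R := sup [set r | exists z, r = dotv z y - psi z].

Lemma hconj_upper x y : hconj y <= dotv x y - psi x + (2 * lam)^-1 * sqnorm2 (f x - y).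
Proof.
apply: ge_sup; first by exists (dotv 0 y - psi 0), 0.
by move=> r [z ->]; apply: pt_upper.
Qed.

Lemma hconj_lower x y : dotv x y - psi x + (2 * L)^-1 * sqnorm2 (f x - y) <= hconj y.
Proof.
apply: le_trans (pt_lower x y) _.
apply: ub_le_sup; last by eexists.
exists (dotv 0 y - psi 0 + (2 * lam)^-1 * sqnorm2 (f 0 - y)).
by move=> r [z ->]; apply: pt_upper.
Qed.

End Conj.

Section Sums.
Context {R : realType}.

Lemma split2 (n p : nat) (G : 'M[R]_(n, p)) (x y : 'I_n -> 'I_p -> R) :
  \sum_(i < n) \sum_(j < p) G i j * (x i j + y i j) =
  \sum_(i < n) \sum_(j < p) G i j * x i j + \sum_(i < n) \sum_(j < p) G i j * y i j.
Proof.
rewrite -big_split; apply: eq_bigr => i _ /=.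
by rewrite -big_split; apply: eq_bigr => j _ /=; rewrite mulrDr.
Qed.

Lemma coupling_split (n p : nat) (alpha : 'rV[R]_p) (G : 'M[R]_(n, p))
  (a : 'I_n -> R) (b : 'I_p -> R) : is_coupling alpha G ->
  \sum_(i < n) \sum_(j < p) G i j * (a i + b j) =
  \sum_(i < n) n%:R^-1 * a i + \sum_(j < p) alpha 0 j * b j.
Proof.
move=> [_ [Hc Hr]].
rewrite (split2 G (fun i _ => a i) (fun _ j => b j)); congr (_ + _).
  by apply: eq_bigr => i _; rewrite -mulr_suml Hr.
rewrite exchange_big; apply: eq_bigr => j _ /=; by rewrite -mulr_suml Hc.
Qed.

Lemma jensen_scalar (p : nat) (N : R) (g t : 'I_p -> R) (s : R) :
  0 < N -> (forall j, 0 <= g j) -> \sum_(j < p) g j = N^-1 ->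
  N^-1 * ((N * \sum_(j < p) g j * t j - s) * (N * \sum_(j < p) g j * t j - s))
  <= \sum_(j < p) g j * ((s - t j) * (s - t j)).
Proof.
move=> N0 g0 gs.
set T := \sum_(j < p) g j * t j; set A := \sum_(j < p) _.
set M := N * T - s.
have S1 : \sum_(j < p) g j * (t j - s) = N^-1 * M.
  have -> : \sum_(j < p) g j * (t j - s) = T - (\sum_(j < p) g j) * s.
    by rewrite mulr_suml -sumrB; apply: eq_bigr => j _; ring.
  by rewrite gs /M; field; rewrite gt_eqF.
have E : \sum_(j < p) g j * ((t j - s - M) * (t j - s - M)) =
   A - 2 * M * (\sum_(j < p) g j * (t j - s)) + M * M * \sum_(j < p) g j.
  rewrite !mulr_sumr -sumrB -big_split /=; apply: eq_bigr => j _; ring.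
have P : 0 <= \sum_(j < p) g j * ((t j - s - M) * (t j - s - M)).
  by apply: sumr_ge0 => j _; apply: mulr_ge0 => //; rewrite -expr2 sqr_ge0.
rewrite E S1 gs in P.
have Q : A - 2 * M * (N^-1 * M) + M * M * N^-1 = A - N^-1 * (M * M) by ring.
rewrite Q in P; lra.
Qed.

Lemma jensen_vec (p d : nat) (N : R) (g : 'I_p -> R) (th : 'I_p -> 'rV[R]_d) (s : 'rV[R]_d) :
  0 < N -> (forall j, 0 <= g j) -> \sum_(j < p) g j = N^-1 ->
  N^-1 * sqnorm2 (N *: \sum_(j < p) g j *: th j - s)
  <= \sum_(j < p) g j * sqnorm2 (s - th j).
Proof.
move=> N0 g0 gs.
rewrite /sqnorm2 /dotv mulr_sumr.
under [X in _ <= X]eq_bigr do rewrite mulr_sumr.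
rewrite [X in _ <= X]exchange_big /=; apply: ler_sum => k _.
have -> : (N *: \sum_(j < p) g j *: th j - s) 0 k = N * \sum_(j < p) g j * th j 0 k - s 0 k.
  by rewrite !mxE summxE; congr (_ * _ - _); apply: eq_bigr => j _; rewrite mxE.
have -> : \sum_(j < p) g j * ((s - th j) 0 k * (s - th j) 0 k) =
          \sum_(j < p) g j * ((s 0 k - th j 0 k) * (s 0 k - th j 0 k)).
  by apply: eq_bigr => j _; rewrite !mxE.
exact: jensen_scalar.
Qed.

End Sums.

Theorem theorem4 (R : realType) (n d p : nat)
  (X : 'I_n -> 'rV[R]_d) (psi : 'rV[R]_d -> R) (fstar : 'rV[R]_d -> 'rV[R]_d)
  (lam L B : R) (alpha : 'rV[R]_p) (thetahat : 'I_p -> 'rV[R]_d) (Gamma : 'M[R]_(n, p)) :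
  is_gradient psi fstar ->
  0 < lam ->
  (forall x z, psi z >= psi x + dotv (fstar x) (z - x) + lam / 2 * sqnorm2 (x - z)) ->
  0 < L ->
  (forall x z, psi z <= psi x + dotv (fstar x) (z - x) + L / 2 * sqnorm2 (x - z)) ->
  (forall i, norm2 (fstar (X i)) <= B) ->
  (forall j, 0 < alpha 0 j) -> \sum_(j < p) alpha 0 j = 1 ->
  is_coupling alpha Gamma ->
  (forall G : 'M[R]_(n, p), is_coupling alpha G ->
     \sum_(i < n) \sum_(j < p) Gamma i j * (1 / 2 * sqnorm2 (X i - thetahat j))
     <= \sum_(i < n) \sum_(j < p) G i j * (1 / 2 * sqnorm2 (X i - thetahat j))) ->
  let fhat := fun i : 'I_n => n%:R *: \sum_(j < p) Gamma i j *: thetahat j in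
  n%:R^-1 * \sum_(i < n) sqnorm2 (fhat i - fstar (X i))
  <= L / lam * W2sq_discrete (fun i => fstar (X i)) alpha thetahat.
Proof.
move=> _ lam0 A1 L0 A2 _ _ _ cG opt /=.
set h := hconj psi.
set a := fun i : 'I_n => psi (X i) - 1 / 2 * sqnorm2 (X i).
set b := fun j : 'I_p => h (thetahat j) - 1 / 2 * sqnorm2 (thetahat j).
set c := fun G : 'M[R]_(n, p) => coupling_cost (fun i => fstar (X i)) thetahat G.
have DE : forall i j, psi (X i) + h (thetahat j) - dotv (X i) (thetahat j) =
    (a i + b j) + 1 / 2 * sqnorm2 (X i - thetahat j).
  by move=> i j; rewrite /a /b sqnorm2B /=; field.
have Dlo : forall i j, (2 * L)^-1 * sqnorm2 (fstar (X i) - thetahat j) <=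
    (a i + b j) + 1 / 2 * sqnorm2 (X i - thetahat j).
  move=> i j; rewrite -DE.
  have := hconj_lower psi fstar lam L lam0 L0 A1 A2 (X i) (thetahat j); rewrite -/h; lra.
have Dup : forall i j, (a i + b j) + 1 / 2 * sqnorm2 (X i - thetahat j) <=
    (2 * lam)^-1 * sqnorm2 (fstar (X i) - thetahat j).
  move=> i j; rewrite -DE.
  have := hconj_upper psi fstar lam lam0 A1 (X i) (thetahat j); rewrite -/h; lra.
have cmp : forall G, is_coupling alpha G -> c Gamma <= L / lam * c G.
  move=> G cG'.
  have H1 : (2 * L)^-1 * c Gamma <=
      \sum_(i < n) \sum_(j < p) Gamma i j * ((a i + b j) + 1 / 2 * sqnorm2 (X i - thetahat j)).
    rewrite /c /coupling_cost mulr_sumr; apply: ler_sum => i _.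
    rewrite mulr_sumr; apply: ler_sum => j _.
    rewrite mulrCA; apply: ler_wpM2l; first by case: cG => [g0 _]; apply: g0.
    exact: Dlo.
  have H3 : \sum_(i < n) \sum_(j < p) G i j * ((a i + b j) + 1 / 2 * sqnorm2 (X i - thetahat j))
      <= (2 * lam)^-1 * c G.
    rewrite /c /coupling_cost mulr_sumr; apply: ler_sum => i _.
    rewrite mulr_sumr; apply: ler_sum => j _.
    rewrite mulrCA; apply: ler_wpM2l; first by case: cG' => [g0 _]; apply: g0.
    exact: Dup.
  rewrite (split2 Gamma (fun i j => a i + b j)) (coupling_split _ _ cG) in H1.
  rewrite (split2 G (fun i j => a i + b j)) (coupling_split _ _ cG') in H3.
  have H2 := opt G cG'.
  have H4 : (2 * L)^-1 * c Gamma <= (2 * lam)^-1 * c G by lra.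
  have -> : c Gamma = (2 * L) * ((2 * L)^-1 * c Gamma) by field; rewrite gt_eqF.
  have -> : L / lam * c G = (2 * L) * ((2 * lam)^-1 * c G) by field; rewrite gt_eqF.
  by apply: ler_wpM2l => //; lra.
have J : n%:R^-1 * \sum_(i < n) sqnorm2 (n%:R *: \sum_(j < p) Gamma i j *: thetahat j - fstar (X i)) <= c Gamma.
  rewrite /c /coupling_cost mulr_sumr; apply: ler_sum => i _.
  have n0 : (0 < n%:R :> R) by rewrite ltr0n (leq_ltn_trans (leq0n i) (ltn_ord i)).
  case: cG => [g0 [_ gr]].
  exact: jensen_vec n0 (fun j => g0 i j) (gr i).
set LHS := n%:R^-1 * _ in J *.
have Ll : 0 < L / lam by apply: divr_gt0.
have K : (L / lam)^-1 * LHS <= W2sq_discrete (fun i => fstar (X i)) alpha thetahat.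
  apply: lb_le_inf; first by exists (c Gamma), Gamma.
  move=> r [G [cG' ->]].
  have := le_trans J (cmp G cG').
  by move=> H; rewrite -(ler_pM2l Ll) mulrA divff ?gt_eqF // mul1r.
have -> : LHS = L / lam * ((L / lam)^-1 * LHS) by rewrite mulrA divff ?gt_eqF // mul1r.
by apply: ler_wpM2l => //; apply: ltW.
Qed.
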